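(* Let $(X_1,Y_1),\dots,(X_n,Y_n)$ be calibration data and $X_{n+1},\dots,X_{n+m}$ test covariates (with unobserved $Y_{n+j}$), $Y_i\in\mathbb{R}$, $s:\mathcal{X}\to[0,1]$ a score, $c\in\mathbb{R}$ a constant, and suppose the risk is binary: $\mathcal{L}(f,x,y)=\mathbf{1}\{y\le c\}$, $L_i=\mathbf{1}\{Y_i\le c\}$. Fix $\alpha\in(0,1)$ and take $\gamma=\alpha$ in the SCoRE e-values. Then for every $j\in\{1,\dots,m\}$, deterministically $E_{\alpha,n+j}(1)\ge e_{n+j}$; furthermore, $e_{n+j}=0$ implies $E_{\alpha,n+j}=0$.
   Context: Let $\mathcal{M}=\{s(X_i)\}_{i=1}^{n+m}$. For $t\in\mathbb{R}$, $\ell\in[0,1]$: $\mathrm{FR}_{n+j}(t;\ell)=\frac{\ell\mathbf{1}\{s(X_{n+j})\le t\}+\sum_{i=1}^nL_i\mathbf{1}\{s(X_i)\le t\}}{1+\sum_{k\ne j}\mathbf{1}\{s(X_{n+k})\le t\}}\cdot\frac{m}{n+1}$, $t_{\gamma,n+j}(\ell)=\max\{t\in\mathcal{M}:\mathrm{FR}_{n+j}(t;\ell)\le\gamma\}$ ($\max\emptyset=-\infty$), $$E_{\gamma,n+j}(\ell)=\frac{(n+1)\mathbf{1}\{s(X_{n+j})\le t_{\gamma,n+j}(\ell)\}}{\ell\mathbf{1}\{s(X_{n+j})\le t_{\gamma,n+j}(\ell)\}+\sum_{i=1}^nL_i\mathbf{1}\{s(X_i)\le t_{\gamma,n+j}(\ell)\}}$$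 (ratio $0$ if numerator $0$), and $E_{\gamma,n+j}=\inf_{\ell\in[0,1]}E_{\gamma,n+j}(\ell)$ (set to $0$ if $\inf_\ell t_{\gamma,n+j}(\ell)=-\infty$). Conformal p-values: with $V(x,y)=\infty\cdot\mathbf{1}\{y>c\}+s(x)$ (where $\infty\cdot0=0$), $p_j=\frac{1+\sum_{i=1}^n\mathbf{1}\{V(X_i,Y_i)\le V(X_{n+j},c)\}}{n+1}$. Let $\mathcal{S}^{\mathrm{CS}}$ be the output of the Benjamini–Hochberg procedure at level $\alpha$ applied to $p_1,\dots,p_m$ (i.e. with $k^*=\max\{k:p_{(k)}\le\alpha k/m\}$, or $0$ if none, $\mathcal{S}^{\mathrm{CS}}=\{j:p_j\le\alpha k^*/m\}$), and $e_{n+j}=\frac{\mathbf{1}\{p_j\le\alpha|\mathcal{S}^{\mathrm{CS}}|/m\}}{\alpha|\mathcal{S}^{\mathrm{CS}}|/m}$ (taken as $0$ when the indicator is $0$). *)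

(* Defs.v *)
From HB Require Import structures.
From mathcomp Require Import all_boot all_order all_algebra.
From mathcomp Require Import all_classical all_reals ereal.
Set Implicit Arguments. Unset Strict Implicit. Unset Printing Implicit Defensive.
Import Order.TTheory GRing.Theory Num.Theory.
Local Open Scope ring_scope.
Local Open Scope classical_set_scope.

(* Setting: calibration data (Xcal i, Ycal i), i < n; test covariates
   Xtest k, k < m; score s : X -> R; constant c; binary risk
   L_i = 1{Ycal i <= c}. Test index j : 'I_m corresponds to n+j. *)

Section SCoRE.
Variables (R : realType) (X : Type) (n m : nat) (s : X -> R)
  (Xcal : 'I_n -> X) (Ycal : 'I_n -> R) (Xtest : 'I_m -> X) (c : R).

Definition ind (b : bool) : R := if b then 1 else 0.

Definition Lrisk (i : 'I_n) : R := ind (Ycal i <= c).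

Definition scores : seq R :=
  [seq s (Xcal i) | i <- enum 'I_n] ++ [seq s (Xtest k) | k <- enum 'I_m].

Definition FR (j : 'I_m) (t l : R) : R :=
  (l * ind (s (Xtest j) <= t) + \sum_(i < n) Lrisk i * ind (s (Xcal i) <= t))
  / (1 + \sum_(k < m | k != j) ind (s (Xtest k) <= t))
  * (m%:R / n.+1%:R).

Definition tthr (gamma : R) (j : 'I_m) (l : R) : \bar R :=
  \big[maxe/-oo%E]_(u <- scores | FR j u l <= gamma) (u%:E).

Definition Eell (gamma : R) (j : 'I_m) (l : R) : \bar R :=
  let t := tthr gamma j l in
  let num : R := n.+1%:R * ind ((s (Xtest j))%:E <= t)%E in
  let den : R := l * ind ((s (Xtest j))%:E <= t)%E
                 + \sum_(i < n) Lrisk i * ind ((s (Xcal i))%:E <= t)%E in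
  if num == 0 then 0%E
  else if den == 0 then +oo%E
  else (num / den)%:E.

Definition Einf (gamma : R) (j : 'I_m) : \bar R :=
  if ereal_inf [set tthr gamma j l | l in [set l : R | 0 <= l <= 1]] == -oo%E
  then 0%E
  else ereal_inf [set Eell gamma j l | l in [set l : R | 0 <= l <= 1]].

(* nonconformity score V(x,y) = oo * 1{y > c} + s(x) *)
Definition Vscore (x : X) (y : R) : \bar R :=
  if c < y then +oo%E else (s x)%:E.

Definition pval (k : 'I_m) : R :=
  (1 + \sum_(i < n) ind (Vscore (Xcal i) (Ycal i) <= Vscore (Xtest k) c)%E)
  / n.+1%:R.

Definition pord (k : nat) : R :=
  nth 0 (sort <=%R [seq pval k | k <- enum 'I_m]) k.-1.

Definition kstar (alpha : R) : nat :=
  \max_(k < m.+1 | (0 < k)%N && (pord k <= alpha * k%:R / m%:R)) k.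

Definition SCS (alpha : R) : {set 'I_m} :=
  [set k : 'I_m | pval k <= alpha * (kstar alpha)%:R / m%:R].

Definition evalue (alpha : R) (k : 'I_m) : R :=
  let thr := alpha * #|SCS alpha|%:R / m%:R in
  if pval k <= thr then 1 / thr else 0.

End SCoRE.

(* Main.v *)
Require Import Defs.
From HB Require Import structures.
From mathcomp Require Import all_boot all_order all_algebra.
From mathcomp Require Import all_classical all_reals ereal.
From mathcomp Require Import ring lra.
Import Order.TTheory GRing.Theory Num.Theory.
Local Open Scope ring_scope.

Lemma ind_ge0 (R : realType) b : 0 <= ind R b.
Proof. by rewrite /ind; case: b. Qed.

Lemma ind_le1 (R : realType) b : ind R b <= 1.
Proof. by rewrite /ind; case: b. Qed.

Lemma ind_mono (R : realType) (a b : bool) : (a -> b) -> ind R a <= ind R b.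
Proof. by rewrite /ind; case: a; case: b => // /(_ isT). Qed.

Lemma sum_ind (R : realType) (T : finType) (P : pred T) :
  \sum_(k : T) ind R (P k) = (#|[set k | P k]|)%:R.
Proof.
rewrite -sum1dep_card natr_sum (big_mkcond P) /=.
by apply: eq_bigr => k _; rewrite /ind; case: (P k).
Qed.

Lemma count_enum_card (T : finType) (P : pred T) :
  count P (enum T) = #|[set k | P k]|.
Proof.
rewrite -sum1_count big_enum_cond /= sum1dep_card //.
Qed.

Theorem proposition5p2 (R : realType) (X : Type) (n m : nat) (s : X -> R)
  (Xcal : 'I_n -> X) (Ycal : 'I_n -> R) (Xtest : 'I_m -> X) (c : R)
  (hs : forall x, 0 <= s x <= 1)
  (alpha : R) (halpha : 0 < alpha < 1) (j : 'I_m) :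
  ((evalue s Xcal Ycal Xtest c alpha j)%:E
     <= Eell s Xcal Ycal Xtest c alpha j 1)%E /\
  (evalue s Xcal Ycal Xtest c alpha j = 0 ->
     Einf s Xcal Ycal Xtest c alpha j = 0%E).
Proof.
case/andP: halpha => ha0 ha1.
have m0 : (0 < m)%N by case: j => k /=; case: m {Xtest} => //.
have m0R : (0 < m%:R :> R) by rewrite ltr0n.
have n0R : (0 < n.+1%:R :> R) by rewrite ltr0n.
set SL := fun u : R => \sum_(i < n) Lrisk Ycal c i * ind R (s (Xcal i) <= u).
have SL0 : forall u, 0 <= SL u.
  move=> u; apply: sumr_ge0 => i _; apply: mulr_ge0; exact: ind_ge0.
have SLmono : forall u v, u <= v -> SL u <= SL v.
  move=> u v huv; apply: ler_sum => i _; apply: ler_wpM2l; first exact: ind_ge0.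
  by apply: ind_mono => h; apply: le_trans huv.
set P := pval s Xcal Ycal Xtest c.
have PE : forall k, P k = (1 + SL (s (Xtest k))) / n.+1%:R.
  move=> k; rewrite /P /pval; congr (_ / _); congr (_ + _).
  apply: eq_bigr => i _; rewrite /Vscore ltxx /Lrisk /ind.
  case: (ltP c (Ycal i)) => hc.
    by rewrite mul0r leye_eq.
  by rewrite lee_fin mul1r.
have Ppos : forall k, 0 < P k.
  by move=> k; rewrite PE divr_gt0 // ltr_pwDl.
have Pmono : forall k u, s (Xtest k) <= u -> P k <= (1 + SL u) / n.+1%:R.
  move=> k u h; rewrite PE ler_pM2r ?invr_gt0 // lerD2l; exact: SLmono.
set pd := pord s Xcal Ycal Xtest c.
set C := fun x : R => #|[set k | P k <= x]|.
have Cm : forall x, (C x <= m)%N.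
  by move=> x; rewrite /C -[X in (_ <= X)%N]card_ord max_card.
have ssS : sorted <=%R (sort <=%R [seq P k | k <- enum 'I_m]).
  by apply: sort_sorted; exact: le_total.
have S1 : forall x r, (0 < r)%N -> (r <= C x)%N -> pd r <= x.
  move=> x r r0 hr; rewrite /pd /pord; apply: nth_count_le; first exact: ssS.
  rewrite count_sort count_map count_enum_card.
  by rewrite (prednK r0).
have S2 : forall x r, (0 < r)%N -> (r <= m)%N -> pd r <= x -> (r <= C x)%N.
  move=> x r r0 rm hx; rewrite leqNgt; apply/negP => hlt.
  have : x < pd r.
    rewrite /pd /pord; apply: nth_count_gt; first exact: ssS.
    rewrite count_sort count_map count_enum_card size_sort size_map size_enum_ord.
    by rewrite (prednK r0) rm andbT -ltnS (prednK r0).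
  by rewrite ltNge hx.
set ks := kstar s Xcal Ycal Xtest c alpha.
have K1 : forall r, (0 < r)%N -> (r <= m)%N -> pd r <= alpha * r%:R / m%:R -> (r <= ks)%N.
  move=> r r0 rm h; rewrite /ks /kstar.
  have := @leq_bigmax_cond _ (fun k : 'I_m.+1 => (0 < k)%N && (pd k <= alpha * k%:R / m%:R)) (fun k => nat_of_ord k) (Ordinal (rm : (r < m.+1)%N)).
  by apply; rewrite /= r0 h.
have K2 : ks = 0%N \/ [/\ (0 < ks)%N, (ks <= m)%N & pd ks <= alpha * ks%:R / m%:R].
  rewrite /ks /kstar; apply: (big_ind (fun k => k = 0%N \/ [/\ (0 < k)%N, (k <= m)%N & pd k <= alpha * k%:R / m%:R])).
  - by left.
  - by move=> a b ha hb; rewrite /maxn; case: ifP.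
  - move=> k /andP[k0 hk]; right; split=> //; rewrite -ltnS; exact: ltn_ord.
have Cmono : forall x y, x <= y -> (C x <= C y)%N.
  move=> x y hxy; apply: subset_leq_card; apply/fintype.subsetP => k.
  by rewrite !inE => h; apply: le_trans hxy.
set S := SCS s Xcal Ycal Xtest c alpha.
have SC : #|S| = C (alpha * ks%:R / m%:R) by [].
have K3 : (ks <= #|S|)%N.
  case: K2 => [-> //|[k0 km hk]]; rewrite SC; exact: S2.
have K4 : (#|S| <= ks)%N.
  case: (posnP #|S|) => [-> //|S0].
  have Sm : (#|S| <= m)%N by rewrite SC Cm.
  apply: K1 => //; apply: S1 => //.
  rewrite [X in (X <= _)%N]SC; apply: Cmono.
  by apply: ler_wpM2r; [rewrite invr_ge0 ler0n| apply: ler_wpM2l; [exact: ltW | rewrite ler_nat]].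
have hks : ks = #|S| by apply/eqP; rewrite eqn_leq K3 K4.
set thr := alpha * #|S|%:R / m%:R.
have SE : forall k, (k \in S) = (P k <= thr).
  by move=> k; rewrite /S /SCS inE -/ks hks.
have LA : forall r, (0 < r)%N -> (r <= C (alpha * r%:R / m%:R))%N -> (r <= #|S|)%N.
  move=> r r0 hr; rewrite -hks; apply: K1 => //; first exact: leq_trans hr (Cm _).
  exact: S1.
set sj := s (Xtest j).
have FRE : forall u, sj <= u -> FR s Xcal Ycal Xtest c j u 1 =
    (1 + SL u) / (#|[set k | s (Xtest k) <= u]|)%:R * (m%:R / n.+1%:R).
  move=> u hj; rewrite /FR; congr (_ / _ * _); first by rewrite /ind -/sj hj mul1r.
  by rewrite -sum_ind [in RHS](bigD1 j) //= /ind -/sj hj.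
have M : forall u, sj <= u -> FR s Xcal Ycal Xtest c j u 1 <= alpha ->
    (0 < #|S|)%N /\ (1 + SL u) / n.+1%:R <= thr.
  move=> u hj hFR.
  set r := #|[set k | s (Xtest k) <= u]|.
  have r0 : (0 < r)%N by apply/card_gt0P; exists j; rewrite inE.
  have r0R : (0 < r%:R :> R) by rewrite ltr0n.
  have q_le : (1 + SL u) / n.+1%:R <= alpha * r%:R / m%:R.
    have -> : (1 + SL u) / n.+1%:R = FR s Xcal Ycal Xtest c j u 1 * r%:R / m%:R.
      rewrite (FRE u hj) -/r; field.
      rewrite (gt_eqF m0R) (gt_eqF r0R) andbT /=.
      have := ler0n R n => hn; apply/eqP => h; lra.
    apply: ler_wpM2r; first by rewrite invr_ge0 ler0n.
    by apply: ler_wpM2r; first exact: ltW.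
  have hr : (r <= C (alpha * r%:R / m%:R))%N.
    apply: subset_leq_card; apply/fintype.subsetP => k; rewrite !inE => hk.
    exact: le_trans (Pmono k u hk) q_le.
  have rS := LA r r0 hr.
  split; first exact: leq_trans r0 rS.
  apply: le_trans q_le _; apply: ler_wpM2r; first by rewrite invr_ge0 ler0n.
  by apply: ler_wpM2l; [exact: ltW | rewrite ler_nat].
have T : tthr s Xcal Ycal Xtest c alpha j 1 = -oo%E \/
    exists u, FR s Xcal Ycal Xtest c j u 1 <= alpha /\
      tthr s Xcal Ycal Xtest c alpha j 1 = u%:E.
  rewrite /tthr; apply: (big_ind (fun t => t = -oo%E \/ exists u,
      FR s Xcal Ycal Xtest c j u 1 <= alpha /\ t = u%:E)).
  - by left.
  - by move=> a b ha hb; rewrite /Order.max; case: ifP.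
  - by move=> u hu; right; exists u.
have E0 : forall l, 0 <= l -> (0 <= Eell s Xcal Ycal Xtest c alpha j l)%E.
  move=> l hl; rewrite /Eell; case: ifP => // _; case: ifP => // _.
  rewrite lee_fin; apply: divr_ge0.
    by apply: mulr_ge0; [exact: ler0n | exact: ind_ge0].
  apply: addr_ge0; first by apply: mulr_ge0; [exact: hl | exact: ind_ge0].
  by apply: sumr_ge0 => i _; apply: mulr_ge0; exact: ind_ge0.
have EellE : forall u, tthr s Xcal Ycal Xtest c alpha j 1 = u%:E -> sj <= u ->
    Eell s Xcal Ycal Xtest c alpha j 1 = (n.+1%:R / (1 + SL u))%:E.
  move=> u ht hj; rewrite /Eell ht lee_fin -/sj hj.
  under eq_bigr => i _ do rewrite lee_fin.
  have i1 : ind R true = 1 by [].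
  rewrite i1 mulr1 mul1r -/(SL u) pnatr_eq0 /=.
  have h : 0 < 1 + SL u by have := SL0 u; lra.
  by rewrite (gt_eqF h).
have evE : evalue s Xcal Ycal Xtest c alpha j = if P j <= thr then 1 / thr else 0 by [].
split.
  rewrite evE; case: ifP => hpj; last exact: E0.
  have jS : j \in S by rewrite SE.
  have [k0 k0S k0max] : exists2 k0, k0 \in S &
      forall k, k \in S -> s (Xtest k) <= s (Xtest k0).
    case: (@arg_maxP _ R 'I_m j (fun k => k \in S) (fun k => s (Xtest k)) jS) => k0 k0S k0max.
    by exists k0.
  set u0 := s (Xtest k0).
  have hj0 : sj <= u0 by exact: k0max.
  set N := #|[set k | s (Xtest k) <= u0]|.
  have SN : (#|S| <= N)%N.
    apply: subset_leq_card; apply/fintype.subsetP => k kS; rewrite inE; exact: k0max.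
  have S0 : (0 < #|S|)%N by apply/card_gt0P; exists j.
  have NR : (0 < N%:R :> R) by rewrite ltr0n; exact: leq_trans S0 SN.
  have hu0 : FR s Xcal Ycal Xtest c j u0 1 <= alpha.
    have FRP : FR s Xcal Ycal Xtest c j u0 1 * N%:R = P k0 * m%:R.
      rewrite (FRE u0 hj0) (PE k0) -/u0 -/N; field.
      rewrite (gt_eqF NR) andbT /=.
      have := ler0n R n => hn; apply/eqP => h; lra.
    rewrite -(ler_pM2r NR) FRP.
    apply: (@le_trans _ _ (thr * m%:R)).
      by apply: ler_wpM2r; [exact: ltW | rewrite -SE].
    have -> : thr * m%:R = alpha * #|S|%:R.
      by rewrite /thr; field; rewrite (gt_eqF m0R).
    by apply: ler_wpM2l; [exact: ltW | rewrite ler_nat].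
  have u0sc : u0 \in scores s Xcal Xtest.
    rewrite /scores mem_cat; apply/orP; right; apply/mapP; exists k0 => //.
    by rewrite mem_enum.
  have hle : (u0%:E <= tthr s Xcal Ycal Xtest c alpha j 1)%E.
    by rewrite /tthr; apply: le_bigmax_seq.
  case: T => [ht | [u [hu ht]]].
    by move: hle; rewrite ht leeNy_eq.
  move: hle; rewrite ht lee_fin => hle.
  have hj : sj <= u by exact: le_trans hj0 hle.
  have [S0' qle] := M u hj hu.
  have thr0 : 0 < thr.
    by rewrite /thr divr_gt0 // mulr_gt0 // ltr0n.
  rewrite (EellE u ht hj) lee_fin div1r.
  have q0 : 0 < (1 + SL u) / n.+1%:R.
    by rewrite divr_gt0 //; have := SL0 u; lra.
  by rewrite -[n.+1%:R / _]invf_div lef_pV2 ?posrE.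
move=> he0.
have E1 : Eell s Xcal Ycal Xtest c alpha j 1 = 0%E.
  case: T => [ht | [u [hu ht]]].
    rewrite /Eell ht.
    have -> : ((sj%:E <= -oo)%E) = false by rewrite leeNy_eq.
    by rewrite /ind /= mulr0 eqxx.
  case: (leP sj u) => hj.
    have [S0 qle] := M u hj hu.
    have thr0 : 0 < thr.
      by rewrite /thr divr_gt0 // mulr_gt0 // ltr0n.
    have hpj : P j <= thr by apply: le_trans (Pmono j u hj) qle.
    move: he0; rewrite evE hpj div1r => /eqP; rewrite invr_eq0 => /eqP h.
    by move: thr0; rewrite h ltxx.
  rewrite /Eell ht lee_fin -/sj.
  have -> : (sj <= u) = false by rewrite leNgt hj.
  by rewrite /ind /= mulr0 eqxx.
rewrite /Einf; case: ifP => // _.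
apply/eqP; rewrite eq_le; apply/andP; split.
  apply: ereal_inf_lbound; exists 1; last exact: E1.
  by rewrite /= ler01 lexx.
apply: le_ereal_inf_tmp => x [l /andP[l0 l1] <-]; exact: E0.
Qed.
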